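(* Let $\phi(z)\in\mathbb{R}[z]$ be a cubic polynomial with positive lead coefficient $a>0$ and at least two distinct fixed points. Denote its fixed points by $\gamma_1,\gamma_2,\gamma_3\in\mathbb{R}$ with $\gamma_1\leq\gamma_2\leq\gamma_3$. Then $\mathfrak{K}_\infty\cap\mathbb{R}\subseteq[\gamma_1,\gamma_3]$, and $$\phi^{-1}([\gamma_1,\gamma_3])\subseteq[\gamma_1,\gamma_1+a^{-1/2}]\cup[\gamma_2-a^{-1/2},\gamma_2+a^{-1/2}]\cup[\gamma_3-a^{-1/2},\gamma_3].$$
   Context: The (archimedean) filled Julia set of $\phi$ is $\mathfrak{K}_\infty=\{x\in\mathbb{C}:\{|\phi^n(x)|:n\ge0\}\text{ is bounded}\}$, where $\phi^n$ is the $n$-th iterate of $\phi$. Fixed points are listed with multiplicity as roots of $\phi(z)-z$; here $\phi^{-1}([\gamma_1,\gamma_3])$ denotes the set of real $x$ with $\phi(x)\in[\gamma_1,\gamma_3]$. *)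

(* Defs.v *)
From HB Require Import structures.
From mathcomp Require Import all_boot all_order all_algebra.
From mathcomp Require Import reals.
From mathcomp Require Import complex.
Set Implicit Arguments. Unset Strict Implicit. Unset Printing Implicit Defensive.
Import Order.TTheory GRing.Theory Num.Theory.
Local Open Scope ring_scope.
Local Open Scope complex_scope.

Definition filled_julia (R : realType) (phi : {poly R}) (x : complex R) : Prop :=
  exists M : R, forall n : nat,
      `|iter n (fun w => (map_poly (fun c : R => c%:C) phi).[w]) x| <= M%:C.

(* Main.v *)
Require Import Defs.
From HB Require Import structures.
From mathcomp Require Import all_boot all_order all_algebra.
From mathcomp Require Import reals complex.
From mathcomp Require Import ring lra.
Import Order.TTheory GRing.Theory Num.Theory.
Local Open Scope ring_scope.
Local Open Scope complex_scope.

Lemma iterC (R : realType) (phi : {poly R}) x n :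
  iter n (fun w => (map_poly (fun c : R => c%:C) phi).[w]) x%:C = (iter n (horner phi) x)%:C.
Proof.
elim: n => [//|n IH] /=. rewrite IH. exact: (horner_map (real_complex R)).
Qed.

Lemma normCR (R : realType) (x : R) : `|x%:C| = `|x|%:C.
Proof. rewrite normc_def /= expr0n /= addr0 sqrtr_sqr //. Qed.

Lemma unb (R : realType) (u : nat -> R) d M : 0 < d ->
  (forall n, u 0%N + n%:R * d <= u n) -> (forall n, u n <= M) -> False.
Proof.
move=> d0 Hl Hu.
have HM : u 0%N <= M := Hu 0%N.
have H0 : 0 <= (M - u 0%N) / d by apply: divr_ge0; lra.
have := archi_boundP H0; set n := Num.Def.archi_bound _ => Hn.
have : (M - u 0%N) < n%:R * d by rewrite -ltr_pdivrMr.
have := Hl n; have := Hu n; lra.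
Qed.

Theorem lemma4p10 (R : realType) (phi : {poly R}) (g1 g2 g3 : R) :
  size phi = 4%N ->
  0 < lead_coef phi ->
  phi - 'X = (lead_coef phi)%:P * ('X - g1%:P) * ('X - g2%:P) * ('X - g3%:P) ->
  g1 <= g2 -> g2 <= g3 ->
  g1 < g3 ->
  (forall x : R, filled_julia phi x%:C -> g1 <= x <= g3) /\
  (forall x : R, g1 <= phi.[x] <= g3 ->
     let r := (Num.sqrt (lead_coef phi))^-1 in
     (g1 <= x <= g1 + r) \/ (g2 - r <= x <= g2 + r) \/ (g3 - r <= x <= g3)).
Proof.
move=> Hs Ha Heq H12 H23 H13.
set a := lead_coef phi in Ha Heq *.
pose f y := a * (y - g1) * (y - g2) * (y - g3).
have Hf : forall y, phi.[y] = y + f y.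
  move=> y; have := congr1 (horner^~ y) Heq; rewrite !hornerE /f => <-; ring.
have fpos : forall y, g3 < y -> 0 < f y.
  move=> y Hy; rewrite /f !mulr_gt0 //; lra.
have fneg : forall y, y < g1 -> f y < 0.
  move=> y Hy; have -> : f y = - (a * (g1 - y) * (g2 - y) * (g3 - y)) by rewrite /f; ring.
  rewrite oppr_lt0 !mulr_gt0 //; lra.
have fmono : forall y z, g3 < y -> y <= z -> f y <= f z.
  move=> y z Hy Hz; rewrite /f; repeat apply: ler_pM; rewrite ?mulr_ge0 //; lra.
have fmono' : forall y z, y < g1 -> z <= y -> - f y <= - f z.
  move=> y z Hy Hz.
  have E : forall w, - f w = a * (g1 - w) * (g2 - w) * (g3 - w) by move=> w; rewrite /f; ring.
  rewrite !E; repeat apply: ler_pM; rewrite ?mulr_ge0 //; lra.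
split.
  move=> x [M HM].
  have HM' : forall n, `|iter n (horner phi) x| <= M.
    by move=> n; have := HM n; rewrite iterC normCR lecR.
  have iS : forall n, iter n.+1 (horner phi) x = iter n (horner phi) x + f (iter n (horner phi) x).
    by move=> n; rewrite /= Hf.
  apply/andP; split; rewrite leNgt; apply/negP => Hx.
    have L : forall n, iter n (horner phi) x <= x + n%:R * f x.
      elim=> [|n IH]; first by rewrite /=; lra.
      rewrite iS.
      have Hn : iter n (horner phi) x <= x.
        have := fneg x Hx; move: IH.
        have : 0 <= n%:R :> R by [].
        nra.
      have := fmono' x _ Hx Hn; rewrite mulrSr; lra.
    apply: (@unb R (fun n => - iter n (horner phi) x) (- f x) M).
    - by rewrite oppr_gt0 fneg.
    - move=> n /=; have := L n; lra.
    - by move=> n; have := HM' n; rewrite ler_norml; lra.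
  have L : forall n, x + n%:R * f x <= iter n (horner phi) x.
    elim=> [|n IH]; first by rewrite /=; lra.
    rewrite iS.
    have Hn : x <= iter n (horner phi) x.
      have := fpos x Hx; move: IH.
      have : 0 <= n%:R :> R by [].
      nra.
    have := fmono x _ Hx Hn; rewrite mulrSr; lra.
  apply: (@unb R (fun n => iter n (horner phi) x) (f x) M).
  - by rewrite fpos.
  - move=> n /=; have := L n; lra.
  - by move=> n; have := HM' n; rewrite ler_norml; lra.
move=> x Hx r.
have sa : 0 < Num.sqrt a by rewrite sqrtr_gt0.
have r0 : 0 < r by rewrite /r invr_gt0.
have ar : a * (r * r) = 1.
  rewrite /r -invfM -expr2 sqr_sqrtr ?mulfV //; [exact: lt0r_neq0 | exact: ltW].
rewrite Hf in Hx.
case/andP: Hx => Hx1 Hx2.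
have Pm : g1 <= x.
  rewrite leNgt; apply/negP => h; have := fneg x h; lra.
have PM : x <= g3.
  rewrite leNgt; apply/negP => h; have := fpos x h; lra.
case: (lerP x (g1 + r)) => h1; first by left; apply/andP; split.
case: (lerP (g3 - r) x) => h3; first by right; right; apply/andP; split.
right; left.
case: (lerP (g2 - r) x) => h4; case: (lerP x (g2 + r)) => h5.
- by apply/andP; split.
- exfalso.
- have E : f x = a * (x - g1) * (x - g2) * (g3 - x) * (-1) by rewrite /f; ring.
  have A1 : a * (r * r) < a * ((x - g2) * (g3 - x)).
    by rewrite ltr_pM2l //; apply: ltr_pM; rewrite ?ltW //; lra.
  have A2 : (x - g1) * 1 < (x - g1) * (a * ((x - g2) * (g3 - x))).
    by rewrite ltr_pM2l; [rewrite -ar | lra].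
  have : f x = - ((x - g1) * (a * ((x - g2) * (g3 - x)))) by rewrite E; ring.
  lra.
- exfalso. have E : f x = a * (x - g1) * (g2 - x) * (g3 - x) by rewrite /f; ring.
  have A1 : a * (r * r) < a * ((x - g1) * (g2 - x)).
    by rewrite ltr_pM2l //; apply: ltr_pM; rewrite ?ltW //; lra.
  have A2 : (g3 - x) * 1 < (g3 - x) * (a * ((x - g1) * (g2 - x))).
    by rewrite ltr_pM2l; [rewrite -ar | lra].
  have : f x = (g3 - x) * (a * ((x - g1) * (g2 - x))) by rewrite E; ring.
  lra.
- exfalso; move: h4 h5 r0; clear; move=> h4 h5 r0; lra.
Qed.
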